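(* Let $A$ be a non-zero $n\times m$ matrix with entries in $[0,1]$. Suppose the row player plays the multiplicative weight update (MWU) algorithm with a non-increasing step size sequence $(\mu_t)$ such that $\lim_{T\to\infty}\sum_{t=1}^T\mu_t=\infty$ and there exists $t'\in\mathbb{N}$ with $\mu_{t'}\le1$, and the column player plays the LRCA algorithm. Then there exists a minimax strategy $\bar x^*$ of the row player such that $\lim_{t\to\infty}RE(\bar x^*\|x_t)=0$, and hence $\lim_{t\to\infty}x_t=\bar x^*$.
   Context: Repeated two-player zero-sum game: at round $t=1,2,\dots$ the row player plays $x_t\in\Delta_n$, the column player plays $y_t\in\Delta_m$; the row player minimizes, the column player maximizes $x_t^\top Ay_t$. $v$ is the value of the game and $f(x):=\max_{y\in\Delta_m}x^\top Ay$; a minimax strategy of the row player is $x$ with $f(x)=v$, of the column player is $y$ with $\min_{x\in\Delta_n}x^\top Ay=v$. Relative entropy: $RE(X_1\|X_2)=\sum_{i}X_1(i)\log\frac{X_1(i)}{X_2(i)}$. MWU for the row player: from an initial $x_1$ with all entries positive, $x_{t+1}(i)=x_t(i)e^{-\mu_t e_i^\top Ay_t}/\sum_j x_t(j)e^{-\mu_t e_j^\top Ay_t}$, $\mu_t\ge0$. LRCA for the column player (who knows $A$ and fixes a minimax strategy $y^*$ of the column player): at odd rounds $y_t=y^*$; at even rounds $t$, $e_t\in\arg\max_{e\in\{e_1,\dots,e_m\}}x_{t-1}^\top Ae$, $\alpha_t=\frac{f(x_{t-1})-v}{\max(n/4,2)}$, $y_t=(1-\alpha_t)y^*+\alpha_te_t$.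 *)

(* Defs.v *)
From mathcomp Require Import all_boot all_order all_algebra.
From mathcomp Require Import all_classical all_reals all_analysis.
Set Implicit Arguments. Unset Strict Implicit. Unset Printing Implicit Defensive.
Import Order.TTheory GRing.Theory Num.Theory.
Local Open Scope classical_set_scope.
Local Open Scope ring_scope.

Section Game.
Context {R : realType}.

Definition simplex (k : nat) : set ('I_k -> R) :=
  [set x | (forall i, 0 <= x i) /\ \sum_(i < k) x i = 1].

Arguments simplex : clear implicits.

Definition payoff (n m : nat) (A : 'M[R]_(n, m)) (x : 'I_n -> R) (y : 'I_m -> R) : R :=
  \sum_(i < n) \sum_(j < m) x i * A i j * y j.

Definition fval (n m : nat) (A : 'M[R]_(n, m)) (x : 'I_n -> R) : R :=
  sup [set payoff A x y | y in simplex m].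

Definition game_value (n m : nat) (A : 'M[R]_(n, m)) : R :=
  inf [set fval A x | x in simplex n].

Definition row_minimax (n m : nat) (A : 'M[R]_(n, m)) (x : 'I_n -> R) : Prop :=
  simplex n x /\ fval A x = game_value A.

Definition col_minimax (n m : nat) (A : 'M[R]_(n, m)) (y : 'I_m -> R) : Prop :=
  simplex m y /\ inf [set payoff A x y | x in simplex n] = game_value A.

(* relative entropy RE(X1 || X2) = sum_i X1(i) log (X1(i)/X2(i))
   (terms with X1(i) = 0 vanish, since 0 * ln _ = 0) *)
Definition RE (n : nat) (X1 X2 : 'I_n -> R) : R :=
  \sum_(i < n) X1 i * ln (X1 i / X2 i).

Definition pure (m : nat) (j : 'I_m) : 'I_m -> R :=
  fun k => if k == j then 1 else 0.

Definition is_MWU (n m : nat) (A : 'M[R]_(n, m)) (mu : nat -> R)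
    (x : nat -> 'I_n -> R) (y : nat -> 'I_m -> R) : Prop :=
  simplex n (x 1%N) /\ (forall i, 0 < x 1%N i) /\
  forall t, (1 <= t)%N -> forall i,
    x t.+1 i = x t i * expR (- mu t * payoff A (pure i) (y t)) /
               \sum_(j < n) x t j * expR (- mu t * payoff A (pure j) (y t)).

Definition is_LRCA (n m : nat) (A : 'M[R]_(n, m)) (ystar : 'I_m -> R)
    (x : nat -> 'I_n -> R) (y : nat -> 'I_m -> R) : Prop :=
  forall t, (1 <= t)%N ->
    (odd t -> y t = ystar) /\
    (~~ odd t -> exists e : 'I_m,
        (forall k : 'I_m, payoff A (x t.-1) (pure k) <= payoff A (x t.-1) (pure e)) /\
        let alpha := (fval A (x t.-1) - game_value A) / Num.max (n%:R / 4) 2 in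
        y t = fun j => (1 - alpha) * ystar j + alpha * pure e j).

End Game.

(* Main.v *)
Require Import Defs.
From mathcomp Require Import all_boot all_order all_algebra.
From mathcomp Require Import all_classical all_reals all_analysis.
From mathcomp Require Import ring lra zify.
Import Order.TTheory GRing.Theory Num.Theory numFieldNormedType.Exports.
Local Open Scope classical_set_scope.
Local Open Scope ring_scope.
Set Implicit Arguments. Unset Strict Implicit. Unset Printing Implicit Defensive.

Section Alg.
Context {R : realType} {n m : nat} (A : 'M[R]_(n, m)).

Lemma sum_pos k (F : 'I_k -> R) i0 : (forall i, 0 <= F i) -> 0 < F i0 -> 0 < \sum_i F i.
Proof.
move=> H0 H1; rewrite (bigD1 i0) //=.
have : 0 <= \sum_(i | i != i0) F i by apply: sumr_ge0 => i _; exact: H0.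
lra.
Qed.

Lemma pure_simplex k (j : 'I_k) : simplex (pure j : 'I_k -> R).
Proof.
split; first by move=> i; rewrite /pure; case: eqP.
rewrite (bigD1 j) //= big1 /pure ?eqxx ?addr0 // => i /negPf ->. by [].
Qed.

Lemma sum_pure k (j : 'I_k) (F : 'I_k -> R) : \sum_i pure j i * F i = F j.
Proof.
rewrite (bigD1 j) //= big1 /pure ?eqxx ?mul1r ?addr0 // => i /negPf ->.
by rewrite mul0r.
Qed.

Lemma sum_pure' k (j : 'I_k) (F : 'I_k -> R) : \sum_i F i * pure j i = F j.
Proof. by rewrite -(sum_pure j F); apply: eq_bigr => i _; rewrite mulrC. Qed.

Lemma payoffE x y : payoff A x y = \sum_i x i * \sum_j A i j * y j.
Proof. by apply: eq_bigr => i _; rewrite mulr_sumr; apply: eq_bigr => j _; rewrite mulrA. Qed.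

Lemma payoff_purel i y : payoff A (pure i) y = \sum_j A i j * y j.
Proof. by rewrite payoffE sum_pure. Qed.

Lemma payoff_sum x y : payoff A x y = \sum_i x i * payoff A (pure i) y.
Proof. by rewrite payoffE; apply: eq_bigr => i _; rewrite payoff_purel. Qed.

Lemma payoff_purer x j : payoff A x (pure j) = \sum_i x i * A i j.
Proof.
by rewrite payoffE; apply: eq_bigr => i _; rewrite sum_pure'.
Qed.

Lemma payoff_sumr x y : payoff A x y = \sum_j payoff A x (pure j) * y j.
Proof.
rewrite /payoff exchange_big; apply: eq_bigr => j _ /=.
rewrite -/(payoff A x (pure j)) payoff_purer mulr_suml.
by apply: eq_bigr.
Qed.

Lemma payoff_mix x y1 y2 a :
  payoff A x (fun j => (1 - a) * y1 j + a * y2 j) =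
  (1 - a) * payoff A x y1 + a * payoff A x y2.
Proof.
rewrite !(payoff_sumr x) !mulr_sumr -big_split /=; apply: eq_bigr => j _.
by rewrite mulrDr !mulrA ![_ * (_ - _)]mulrC ![payoff A x (pure j) * a]mulrC.
Qed.

End Alg.
Section Game2.
Context {R : realType} {n m : nat} (A : 'M[R]_(n, m)).
Hypothesis A01 : forall i j, 0 <= A i j <= 1.
Hypothesis n0 : (0 < n)%N.
Hypothesis m0 : (0 < m)%N.

Local Notation v := (game_value A).
Local Notation f := (fval A).

Lemma payoff_ge0 x y : simplex x -> simplex y -> 0 <= payoff A x y.
Proof.
move=> [x0 _] [y0 _]; apply: sumr_ge0 => i _; apply: sumr_ge0 => j _.
have := A01 i j => /andP[a0 _].
by apply: mulr_ge0 => //; apply: mulr_ge0.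
Qed.

Lemma payoff_le1 x y : simplex x -> simplex y -> payoff A x y <= 1.
Proof.
move=> [x0 x1] [y0 y1]; rewrite payoff_sum -x1; apply: ler_sum => i _.
rewrite -[leRHS]mulr1; apply: ler_wpM2l => //.
rewrite payoff_purel -y1; apply: ler_sum => j _.
have := A01 i j => /andP[a0 a1].
by rewrite -[leRHS]mul1r; apply: ler_wpM2r.
Qed.

Lemma exists_best x : exists e : 'I_m, forall k, payoff A x (pure k) <= payoff A x (pure e).
Proof.
pose j0 : 'I_m := Ordinal m0.
case: (@arg_maxP _ _ _ j0 xpredT (fun j => payoff A x (pure j)) isT) => e _ He.
by exists e => k; apply: He.
Qed.

Lemma fval_best x e : simplex x ->
  (forall k, payoff A x (pure k) <= payoff A x (pure e)) -> f x = payoff A x (pure e).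
Proof.
move=> sx He; have ub : ubound [set payoff A x y | y in @simplex R m] (payoff A x (pure e)).
  move=> z [y [y0 y1] <-]; rewrite payoff_sumr.
  rewrite -[leRHS]mulr1 -y1 mulr_sumr; apply: ler_sum => j _.
  by apply: ler_wpM2r.
apply/le_anti/andP; split.
  by apply: ge_sup => //; exists (payoff A x (pure e)); exists (pure e) => //; exact: pure_simplex.
apply: ub_le_sup; first by exists (payoff A x (pure e)).
by exists (pure e) => //; exact: pure_simplex.
Qed.

Lemma payoff_le_fval x y : simplex x -> simplex y -> payoff A x y <= f x.
Proof.
move=> sx [y0 y1]; have [e He] := exists_best x.
rewrite (fval_best sx He) payoff_sumr -[leRHS]mulr1 -y1 mulr_sumr.
by apply: ler_sum => j _; apply: ler_wpM2r.
Qed.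

Lemma fval_ge0 x : simplex x -> 0 <= f x.
Proof.
move=> sx; have [e He] := exists_best x; rewrite (fval_best sx He).
by apply: payoff_ge0 => //; exact: pure_simplex.
Qed.

Lemma fval_le1 x : simplex x -> f x <= 1.
Proof.
move=> sx; have [e He] := exists_best x; rewrite (fval_best sx He).
by apply: payoff_le1 => //; exact: pure_simplex.
Qed.

Lemma v_le_f x : simplex x -> v <= f x.
Proof.
move=> sx; apply: ge_inf; last by exists x.
by exists 0 => z [w sw <-]; apply: fval_ge0.
Qed.

Lemma v_ge0 : 0 <= v.
Proof.
apply: lb_le_inf; first by exists (f (pure (Ordinal n0))), (pure (Ordinal n0)) => //; exact: pure_simplex.
by move=> z [w sw <-]; apply: fval_ge0.
Qed.

Lemma inf_approx eps : 0 < eps -> exists x, simplex x /\ f x < v + eps.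
Proof.
move=> e0; have [|z [w sw <-] H] := @inf_adherent _ [set f x | x in @simplex R n] eps e0.
  split; first by exists (f (pure (Ordinal n0))), (pure (Ordinal n0)) => //; exact: pure_simplex.
  by exists 0 => z [w sw <-]; apply: fval_ge0.
by exists w.
Qed.

Lemma fval_lip x z : simplex x -> simplex z -> f x <= f z + \sum_i `|x i - z i|.
Proof.
move=> sx sz; have [e He] := exists_best x; rewrite (fval_best sx He).
have := payoff_le_fval sz (pure_simplex e).
rewrite !payoff_purer => H.
suff : \sum_i x i * A i e <= \sum_i z i * A i e + \sum_i `|x i - z i| by lra.
rewrite -big_split; apply: ler_sum => i _ /=.
have := A01 i e => /andP[a0 a1].
have : (x i - z i) * A i e <= `|x i - z i|.
  apply: le_trans (ler_norm _) _; rewrite normrM.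
  by rewrite -[leRHS]mulr1; apply: ler_wpM2l => //; rewrite ger0_norm.
nra.
Qed.

End Game2.
Lemma ln_le_sub1 {R : realType} (z : R) : 0 < z -> ln z <= z - 1.
Proof.
move=> z0; have := @le_ln1Dx R (z - 1); rewrite addrCA subrr addr0; apply; lra.
Qed.

Lemma expRN_le {R : realType} (u : R) : 0 <= u -> expR (- u) <= 1 - u + u ^+ 2.
Proof.
move=> u0; have h1 : 1 + u / 2 <= expR (u / 2) by apply: expR_ge1Dx.
have h2 : (1 + u / 2) ^+ 2 <= expR u.
  have -> : u = u / 2 + u / 2 by field.
  rewrite expRD -expr2; apply: lerXn2r => //; rewrite ?nnegrE; lra.
have eg := expR_gt0 u.
rewrite expRN.
have hp : 0 < 1 - u + u ^+ 2 by nra.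
rewrite -(@ler_pM2r _ (expR u)) // mulVf ?gt_eqF //.
nra.
Qed.

Section Dyn.
Context {R : realType} {n m : nat} (A : 'M[R]_(n, m)).
Hypothesis A01 : forall i j, 0 <= A i j <= 1.
Hypothesis n0 : (0 < n)%N.
Hypothesis m0 : (0 < m)%N.
Variables (mu : nat -> R) (ystar : 'I_m -> R) (x : nat -> 'I_n -> R) (y : nat -> 'I_m -> R).
Hypothesis mu0 : forall t, (1 <= t)%N -> 0 <= mu t.
Hypothesis HM : is_MWU A mu x y.

Definition Z t := \sum_j x t j * expR (- mu t * payoff A (pure j) (y t)).

Lemma x_simplex_pos t : (1 <= t)%N -> simplex (x t) /\ forall i, 0 < x t i.
Proof.
case: HM => s1 [p1 Hs].
elim: t => [//|t IH] Ht.
case: (posnP t) => [-> | tp]; first by split.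
have [[sx1 sx2] px] := IH tp.
have Zp : 0 < Z t.
  apply: (sum_pos (i0:=Ordinal n0)) => [i|].
    by apply: mulr_ge0; apply: ltW; rewrite ?px ?expR_gt0.
  by rewrite mulr_gt0 ?px ?expR_gt0.
split; last first.
  by move=> i; rewrite Hs //; apply: divr_gt0 => //; rewrite mulr_gt0 ?px ?expR_gt0.
split.
  by move=> i; rewrite Hs //; apply: ltW; apply: divr_gt0 => //; rewrite mulr_gt0 ?px ?expR_gt0.
under eq_bigr => i _ do rewrite Hs //.
by rewrite -mulr_suml -/(Z t) mulfV // gt_eqF.
Qed.

Lemma Z_pos t : (1 <= t)%N -> 0 < Z t.
Proof.
move=> Ht; have [_ px] := x_simplex_pos Ht.
apply: (sum_pos (i0:=Ordinal n0)) => [i|].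
  by apply: mulr_ge0; apply: ltW; rewrite ?px ?expR_gt0.
by rewrite mulr_gt0 ?px ?expR_gt0.
Qed.

Lemma RE_split (p q : 'I_n -> R) : (forall i, 0 <= p i) -> (forall i, 0 < q i) ->
  RE p q = \sum_i p i * (ln (p i) - ln (q i)).
Proof.
move=> p0 q0; apply: eq_bigr => i _.
have := p0 i; rewrite le_eqVlt => /orP[/eqP <-|pp]; first by rewrite !mul0r.
by rewrite lnM ?posrE ?invr_gt0 // lnV ?posrE.
Qed.

Lemma RE_step p t : (1 <= t)%N -> simplex p ->
  RE p (x t.+1) = RE p (x t) + mu t * payoff A p (y t) + ln (Z t).
Proof.
move=> Ht [p0 p1].
have [_ px] := x_simplex_pos Ht.
have [_ px1] := x_simplex_pos (leqW Ht).
have Zp := Z_pos Ht.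
case: HM => _ [_ Hs].
rewrite !RE_split // payoff_sum -addrA mulr_sumr.
have -> : ln (Z t) = \sum_i p i * ln (Z t) by rewrite -mulr_suml p1 mul1r.
rewrite -!big_split /=; apply: eq_bigr => i _.
rewrite Hs // lnM ?posrE ?invr_gt0 ?mulr_gt0 ?expR_gt0 //.
rewrite lnM ?posrE ?expR_gt0 // lnV ?posrE // expRK; ring.
Qed.


Hypothesis HL : is_LRCA A ystar x y.
Hypothesis Hy : col_minimax A ystar.

Local Notation v := (game_value A).
Local Notation f := (fval A).
Definition DD : R := Num.max (n%:R / 4) 2.

Lemma DD_ge2 : 2 <= DD.
Proof. by rewrite /DD le_max lexx orbT. Qed.

Lemma cstar i : v <= payoff A (pure i) ystar.
Proof.
case: Hy => sy <-; apply: ge_inf; last by exists (pure i) => //; exact: pure_simplex.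
by exists 0 => z [w sw <-]; apply: payoff_ge0.
Qed.

Lemma minimax_le p z : row_minimax A p -> simplex z -> payoff A p z <= v.
Proof. by case=> sp <-; apply: payoff_le_fval. Qed.

Lemma odd_step p t : (1 <= t)%N -> odd t -> row_minimax A p ->
  RE p (x t.+1) <= RE p (x t).
Proof.
move=> Ht ot rp.
have [sp _] := rp.
rewrite RE_step //.
have [yo _] := HL Ht; rewrite (yo ot).
have P1 := minimax_le rp (proj1 Hy).
have [[x0 x1] px] := x_simplex_pos Ht.
have Zp := Z_pos Ht.
have mt := mu0 Ht.
suff : ln (Z t) <= - (mu t * v) by nra.
rewrite -[X in _ <= X]expRK ler_ln ?posrE ?expR_gt0 //.
rewrite /Z (yo ot) -[leRHS]mul1r -x1 mulr_suml; apply: ler_sum => i _.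
apply: ler_wpM2l => //; rewrite ler_expR.
have := cstar i; nra.
Qed.

Lemma W_le (z : 'I_n -> R) (b : 'I_n -> R) s : simplex z -> (forall i, 0 <= b i <= 1) -> 0 <= s ->
  \sum_i z i * expR (- (s * b i)) <= 1 - s * \sum_i z i * b i + s ^+ 2.
Proof.
move=> [z0 z1] b01 s0.
have -> : 1 - s * \sum_i z i * b i + s ^+ 2 = \sum_i z i * (1 - s * b i + s ^+ 2).
  have -> : \sum_i z i * (1 - s * b i + s ^+ 2) =
     \sum_i z i - s * \sum_i z i * b i + s ^+ 2 * \sum_i z i.
    rewrite !mulr_sumr -sumrB -big_split /=; apply: eq_bigr => i _; ring.
  by rewrite z1 mulr1.
apply: ler_sum => i _; apply: ler_wpM2l => //.
have := b01 i => /andP[b0 b1].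
apply: le_trans (expRN_le _) _; first exact: mulr_ge0.
have : (s * b i) ^+ 2 <= s ^+ 2.
  rewrite !expr2; have hs : 0 <= s * s by apply: mulr_ge0.
  have hb : b i * b i <= 1 by nra.
  nra.
lra.
Qed.

Lemma pair_step p t : (1 <= t)%N -> odd t -> mu t.+1 <= 1 -> row_minimax A p ->
  RE p (x t.+2) <= RE p (x t) - mu t.+1 * ((f (x t) - v) / DD) ^+ 2.
Proof.
move=> Ht ot mu1 rp.
have [sp _] := rp.
have Ht1 : (1 <= t.+1)%N by [].
rewrite RE_step // RE_step //.
have [yo _] := HL Ht; have ye := (HL Ht1).2.
have [e [He Hye]] : _ := ye (ltac:(by rewrite /= ot)).
rewrite /= in He Hye.
set al := (f (x t) - v) / DD in Hye *.
have P1 := minimax_le rp (proj1 Hy).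
have Pe := minimax_le rp (pure_simplex e).
have [[x0 x1] px] := x_simplex_pos Ht.
have [[x0' x1'] px'] := x_simplex_pos Ht1.
have Zp := Z_pos Ht. have Zp' := Z_pos Ht1.
have mt := mu0 Ht. have mt' := mu0 Ht1.
have sxt : simplex (x t) by [].
have fv := v_le_f A01 m0 sxt.
have f1 := fval_le1 A01 m0 sxt.
have v0 := v_ge0 A01 n0 m0.
have D2 := DD_ge2.
have Dp : 0 < DD by lra.
have al0 : 0 <= al by apply: divr_ge0; lra.
have al1 : al <= 1.
  rewrite /al ler_pdivrMr //; lra.
have fe : f (x t) = \sum_i x t i * A i e by rewrite (fval_best sxt He) payoff_purer.
have alD : al * DD = f (x t) - v by rewrite /al divfK // gt_eqF.
rewrite (yo ot) Hye payoff_mix.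
set s := mu t.+1 * al.
have s0 : 0 <= s by apply: mulr_ge0.
have ZZ : Z t * Z t.+1 = \sum_i x t i * expR (- mu t * payoff A (pure i) ystar) *
           expR (- mu t.+1 * payoff A (pure i) (y t.+1)).
  rewrite /Z mulr_sumr; apply: eq_bigr => i _.
  case: HM => _ [_ Hs]; rewrite Hs // (yo ot).
  have := Zp; rewrite /Z (yo ot) => Zp2.
  by field; rewrite gt_eqF.
set K := - (mu t * v) - mu t.+1 * (1 - al) * v.
have ZZle : Z t * Z t.+1 <= expR K * \sum_i x t i * expR (- (s * A i e)).
  rewrite ZZ mulr_sumr; apply: ler_sum => i _.
  rewrite -mulrA [expR K * _]mulrCA; apply: ler_wpM2l; first exact: ltW (px i).
  rewrite -!expRD ler_expR Hye payoff_mix.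
  have -> : payoff A (pure i) (pure e) = A i e by rewrite payoff_purel sum_pure'.
  have ci := cstar i.
  rewrite /K /s.
  have h1 : mu t * v <= mu t * payoff A (pure i) ystar by apply: ler_wpM2l.
  have h2 : mu t.+1 * (1 - al) * v <= mu t.+1 * (1 - al) * payoff A (pure i) ystar.
    by apply: ler_wpM2l => //; apply: mulr_ge0 => //; lra.
  lra.
have Wle := @W_le (x t) (fun i => A i e) s sxt (fun i => A01 i e) s0.
rewrite -fe in Wle.
have Wp : 0 < \sum_i x t i * expR (- (s * A i e)).
  apply: (sum_pos (i0:=Ordinal n0)) => [i|].
    by apply: mulr_ge0; apply: ltW; rewrite ?px ?expR_gt0.
  by rewrite mulr_gt0 ?px ?expR_gt0.
have lnZZ : ln (Z t) + ln (Z t.+1) <= K + (\sum_i x t i * expR (- (s * A i e)) - 1).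
  rewrite -lnM ?posrE //.
  apply: le_trans (_ : ln (expR K * \sum_i x t i * expR (- (s * A i e))) <= _).
    by rewrite ler_ln ?posrE ?mulr_gt0 ?expR_gt0.
  rewrite lnM ?posrE ?expR_gt0 // expRK lerD2l; exact: ln_le_sub1.
have mP2 : mu t.+1 * ((1 - al) * payoff A p ystar + al * payoff A p (pure e)) <= mu t.+1 * v.
  by apply: ler_wpM2l => //; nra.
have mP1 : mu t * payoff A p ystar <= mu t * v by apply: ler_wpM2l.
rewrite /K /s in lnZZ Wle.
have key : mu t.+1 * al * v - mu t.+1 * al * f (x t) = - (mu t.+1 * al * (al * DD)).
  by rewrite alD; ring.
have : mu t.+1 * al ^+ 2 * (mu t.+1 - DD) <= - (mu t.+1 * al ^+ 2).
  have : 0 <= mu t.+1 * al ^+ 2 by apply: mulr_ge0 => //; apply: sqr_ge0.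
  nra.
nra.
Qed.

End Dyn.

Lemma cluster_simplex {R : realType} n (z : nat -> 'I_n -> R) : (forall N, simplex (z N)) ->
  exists p, simplex p /\ forall d, 0 < d -> forall N, exists2 N', (N <= N')%N & forall i, `|z N' i - p i| < d.
Proof.
move=> sz.
pose w N : 'rV[R]_n := \row_i z N i.
have cS := @rV_compact R n (fun _ => `[0, 1]%classic) (fun _ => @segment_compact R 0 1).
have FS : (w @ \oo) [set v : 'rV[R]_n | forall i, `[0, 1]%classic (v ord0 i)].
  exists 0%N => // N _ i /=; rewrite mxE in_itv /=.
  have [z0 z1] := sz N; apply/andP; split => //.
  rewrite -z1 (bigD1 i) //= lerDl; apply: sumr_ge0 => j _; exact: z0.
have [a [Sa Ca]] := cS (w @ \oo) _ FS.
have near : forall d, 0 < d -> forall N, exists2 N', (N <= N')%N & forall i, `|z N' i - a ord0 i| < d.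
  move=> d d0 N.
  have FA : (w @ \oo) [set u | exists2 N', (N <= N')%N & u = w N'].
    by exists N => // N' /= HN; exists N'.
  have [u [[N' HN ->] Bu]] := Ca _ _ FA (nbhsx_ballx a d d0).
  exists N' => // i.
  case: Bu => _ /(_ ord0 i); rewrite mxE /ball /= distrC.
  done.
exists (fun i => a ord0 i); split; last exact: near.
split.
  move=> i; have := Sa i; rewrite /= in_itv /= => /andP[] //.
apply/eqP; rewrite -subr_eq0 -normr_le0; apply/ler_addgt0Pr => e e0.
have dp : 0 < e / (n%:R + 1) by apply: divr_gt0 => //; rewrite ltr_wpDl.
have [N' _ HN] := near _ dp 0%N.
have [_ z1] := sz N'.
rewrite add0r -{1}z1 -sumrB.
apply: le_trans (ler_norm_sum _ _ _) _.
apply: le_trans (_ : \sum_(i < n) e / (n%:R + 1) <= _).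
  by apply: ler_sum => i _; rewrite distrC; apply: ltW.
rewrite sumr_const card_ord -(mulr_natr (e / (n%:R + 1)) n) mulrAC ler_pdivrMr ?ltr_wpDl //.
have : (0 <= n%:R :> R) by [].
nra.
Qed.

Lemma h_bound {R : realType} (p q : R) : 0 <= p <= 1 -> 0 < q <= 1 ->
  (q - p) ^+ 2 <= 4 * (p * ln (p / q) - p + q).
Proof.
move=> /andP[p0 p1] /andP[q0 q1].
have := p0; rewrite le_eqVlt => /orP[/eqP <-|pp].
  rewrite !mul0r subr0 add0r expr2; nra.
set a := Num.sqrt p; set b := Num.sqrt q.
have a0 : 0 < a by rewrite sqrtr_gt0.
have b0 : 0 < b by rewrite sqrtr_gt0.
have pa : p = a ^+ 2 by rewrite /a sqr_sqrtr.
have qb : q = b ^+ 2 by rewrite /b sqr_sqrtr // ltW.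
have a1 : a <= 1 by rewrite /a -sqrtr1 ler_sqrt.
have b1 : b <= 1 by rewrite /b -sqrtr1 ler_sqrt.
have ba0 : 0 < b / a by apply: divr_gt0.
have hl : ln (p / q) = - (ln (b / a) *+ 2).
  rewrite -lnXn // -lnV ?posrE ?exprn_gt0 //; congr ln.
  by rewrite pa qb; field; rewrite !gt_eqF.
have hln := ln_le_sub1 ba0.
have : p * ln (p / q) >= - 2 * a * b + 2 * a ^+ 2.
  rewrite hl pa mulrN mulr2n.
  have : a ^+ 2 * (ln (b / a)) <= a ^+ 2 * (b / a - 1) by apply: ler_wpM2l => //; apply: sqr_ge0.
  have -> : a ^+ 2 * (b / a - 1) = a * b - a ^+ 2 by field; rewrite gt_eqF.
  lra.
rewrite pa qb => H.
have e1 : (b ^+ 2 - a ^+ 2) ^+ 2 = (b - a) ^+ 2 * (b + a) ^+ 2 by ring.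
have e2 : (b + a) ^+ 2 <= 4.
  have : b + a <= 2 by lra.
  have : 0 <= b + a by lra.
  rewrite expr2; nra.
have e3 : 0 <= (b - a) ^+ 2 by apply: sqr_ge0.
have e4 : (b - a) ^+ 2 * (b + a) ^+ 2 <= (b - a) ^+ 2 * 4 by apply: ler_wpM2l.
rewrite e1; apply: le_trans e4 _.
have -> : (b - a) ^+ 2 = b ^+ 2 - 2 * a * b + a ^+ 2 by ring.
lra.
Qed.

Lemma h_ge0 {R : realType} (p q : R) : 0 <= p -> 0 < q -> 0 <= p * ln (p / q) - p + q.
Proof.
move=> p0 q0; have := p0; rewrite le_eqVlt => /orP[/eqP <-|pp].
  by rewrite mul0r subr0 add0r ltW.
have qp : 0 < q / p by apply: divr_gt0.
have hl := ln_le_sub1 qp.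
have -> : ln (p / q) = - ln (q / p) by rewrite -lnV ?posrE // invf_div.
have : p * ln (q / p) <= p * (q / p - 1) by apply: ler_wpM2l.
have -> : p * (q / p - 1) = q - p by field; rewrite gt_eqF.
lra.
Qed.

Lemma RE_h {R : realType} n (p q : 'I_n -> R) : simplex p -> simplex q ->
  RE p q = \sum_i (p i * ln (p i / q i) - p i + q i).
Proof.
move=> [_ p1] [_ q1].
rewrite !big_split /= sumrN p1 q1 /RE; lra.
Qed.

Lemma RE_ge0 {R : realType} n (p q : 'I_n -> R) : simplex p -> simplex q -> (forall i, 0 < q i) ->
  0 <= RE p q.
Proof.
move=> sp sq qp; rewrite RE_h //; apply: sumr_ge0 => i _; apply: h_ge0 => //.
by case: sp.
Qed.

Lemma RE_coord {R : realType} n (p q : 'I_n -> R) i : simplex p -> simplex q -> (forall i, 0 < q i) ->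
  (q i - p i) ^+ 2 <= 4 * RE p q.
Proof.
move=> sp sq qp.
have le1 (r : 'I_n -> R) j : simplex r -> r j <= 1.
  move=> [r0 r1]; rewrite -r1 (bigD1 j) //= lerDl; apply: sumr_ge0 => k _; exact: r0.
apply: le_trans (h_bound _ _) _.
- by apply/andP; split; [case: sp | exact: le1].
- by apply/andP; split; [exact: qp | exact: le1].
rewrite ler_pM2l // RE_h // (bigD1 i) //= lerDl; apply: sumr_ge0 => j _.
by apply: h_ge0 => //; case: sp.
Qed.

Lemma RE_small {R : realType} n (p q : 'I_n -> R) d : simplex p -> (forall i, 0 < q i) ->
  (forall i, 0 < p i -> `|q i - p i| <= p i / 2) -> (forall i, `|q i - p i| <= d) ->
  RE p q <= 2 * d * n%:R.
Proof.
move=> [p0 _] qp Hh Hd.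
have -> : 2 * d * n%:R = \sum_(i < n) (2 * d) by rewrite sumr_const card_ord mulr_natr.
apply: ler_sum => i _.
have := p0 i; rewrite le_eqVlt => /orP[/eqP <-|pp].
  rewrite mul0r; have := Hd i; have := normr_ge0 (q i - p i); lra.
have H := Hh i pp; have := Hd i => Hdi.
have qi := qp i.
have q2 : p i / 2 <= q i.
  have := ler_norm (p i - q i); rewrite distrC; lra.
have pq0 : 0 < p i / q i by apply: divr_gt0.
have := ln_le_sub1 pq0 => hl.
have : p i * ln (p i / q i) <= p i * (p i / q i - 1) by apply: ler_wpM2l => //; exact: ltW.
have -> : p i * (p i / q i - 1) = (p i / q i) * (p i - q i) by field; rewrite gt_eqF.
have pq2 : p i / q i <= 2 by rewrite ler_pdivrMr //; lra.
have : (p i / q i) * (p i - q i) <= 2 * `|q i - p i|.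
  have n0 := normr_ge0 (q i - p i).
  have : p i - q i <= `|q i - p i| by rewrite distrC ler_norm.
  have r0 : 0 <= p i / q i by exact: ltW.
  nra.
lra.
Qed.

Lemma n_pos {R : realType} n (F : 'I_n -> R) : \sum_i F i = 1 -> (0 < n)%N.
Proof.
by case: n F => [|k] F //; rewrite big_ord0 => /esym/eqP; rewrite oner_eq0.
Qed.

Lemma archi_small {R : realType} (K e : R) : 0 <= K -> 0 < e -> exists N : nat, K / N.+1%:R < e.
Proof.
move=> K0 e0; have h := archi_boundP (divr_ge0 K0 (ltW e0)).
exists (Num.Def.archi_bound (K / e)).
rewrite ltr_pdivrMr // mulrC -ltr_pdivrMr //.
by apply: lt_le_trans h _; rewrite ler_nat.
Qed.

Lemma inv_mono {R : realType} (K : R) N N' : 0 <= K -> (N <= N')%N -> K / N'.+1%:R <= K / N.+1%:R.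
Proof.
move=> K0 NN; apply: ler_wpM2l => //; rewrite lef_pV2 ?posrE ?ltr0Sn // ler_nat ltnS.
exact: NN.
Qed.

Lemma fval_cluster {R : realType} n m (A : 'M[R]_(n, m)) (z : nat -> 'I_n -> R) p K :
  (forall i j, 0 <= A i j <= 1) -> (0 < m)%N ->
  simplex p -> (forall N, simplex (z N)) -> 0 <= K ->
  (forall d, 0 < d -> forall N, exists2 N', (N <= N')%N & forall i, `|z N' i - p i| < d) ->
  (forall N, fval A (z N) <= game_value A + K / N.+1%:R) ->
  fval A p <= game_value A.
Proof.
move=> A01 m0 sp sz K0 cl Hz.
apply/ler_addgt0Pr => e e0.
have e2 : 0 < e / 2 by apply: divr_gt0.
have [N HN] := archi_small K0 e2.
have dp : 0 < e / 2 / (n%:R + 1) by apply: divr_gt0 => //; rewrite ltr_wpDl.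
have [N' NN' Hd] := cl _ dp N.
have := fval_lip A01 m0 sp (sz N').
have := Hz N'.
have := inv_mono K0 NN'.
have : \sum_i `|p i - z N' i| <= e / 2.
  apply: le_trans (_ : \sum_(i < n) e / 2 / (n%:R + 1) <= _).
    by apply: ler_sum => i _; rewrite distrC; apply: ltW.
  rewrite sumr_const card_ord -(mulr_natr (e / 2 / (n%:R + 1)) n) mulrAC ler_pdivrMr ?ltr_wpDl //.
  have : (0 <= n%:R :> R) by [].
  nra.
move=> h1 h2 h3 h4.
apply: (le_trans h4); rewrite [e](splitr e) addrA lerD //.
apply: (le_trans h3); rewrite lerD2l.
exact: (le_trans h2 (ltW HN)).
Qed.

Lemma RE_mono_from {R : realType} n m (A : 'M[R]_(n, m)) mu ystar x y p k0 :
  (forall i j, 0 <= A i j <= 1) -> (0 < n)%N -> (0 < m)%N ->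
  (forall t, (1 <= t)%N -> 0 <= mu t) -> is_MWU A mu x y -> is_LRCA A ystar x y ->
  col_minimax A ystar -> row_minimax A p -> (1 <= k0)%N -> odd k0 ->
  (forall t, (k0 <= t)%N -> mu t <= 1) ->
  forall t, (k0 <= t)%N -> RE p (x t) <= RE p (x k0).
Proof.
move=> A01 n0 m0 mu0 HM HL Hy rp k1 ok mu1.
have ev : forall j, RE p (x (k0 + j.*2)%N) <= RE p (x k0).
  elim=> [|j IH]; first by rewrite addn0.
  apply: le_trans IH.
  have -> : (k0 + j.+1.*2 = (k0 + j.*2).+2)%N by rewrite doubleS addnS addnS.
  apply: le_trans (pair_step A01 n0 m0 mu0 HM HL Hy _ _ _ rp) _.
  - by apply: leq_trans k1 (leq_addr _ _).
  - by rewrite oddD odd_double addbF.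
  - by apply: mu1; rewrite -addnS leq_addr.
  have : 0 <= mu (k0 + j.*2).+1 * ((fval A (x (k0 + j.*2)%N) - game_value A) / @DD R n) ^+ 2.
    by apply: mulr_ge0; [apply: mu0 | apply: sqr_ge0].
  lra.
move=> t kt.
have -> : t = (k0 + (odd (t - k0) + (t - k0)./2.*2))%N by rewrite odd_double_half subnKC.
case: (odd (t - k0)); last by rewrite add0n; exact: ev.
rewrite add1n addnS; apply: le_trans (ev (t - k0)./2).
apply: (odd_step A01 n0 m0 mu0 HM HL Hy _ _ rp).
- by apply: leq_trans k1 (leq_addr _ _).
- by rewrite oddD odd_double addbF.
Qed.

Unset Implicit Arguments.
Set Strict Implicit.

Theorem theorem5 (R : realType) (n m : nat) (A : 'M[R]_(n, m))
  (mu : nat -> R) (ystar : 'I_m -> R)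
  (x : nat -> 'I_n -> R) (y : nat -> 'I_m -> R) :
  A != 0 ->
  (forall i j, 0 <= A i j <= 1) ->
  (forall t, (1 <= t)%N -> 0 <= mu t) ->
  (forall t, (1 <= t)%N -> mu t.+1 <= mu t) ->
  (fun T : nat => \sum_(1 <= t < T.+1) mu t) @ \oo --> +oo ->
  (exists t', (1 <= t')%N /\ mu t' <= 1) ->
  col_minimax A ystar ->
  is_MWU A mu x y ->
  is_LRCA A ystar x y ->
  exists xbar, row_minimax A xbar /\
    RE xbar (x t) @[t --> \oo] --> (0 : R) /\
    (forall i, x t i @[t --> \oo] --> xbar i).
Proof.
move=> _ A01 mu0 mudec Hsum [t' [t'1 mut']] Hy HM HL.
have n0 : (0 < n)%N by case: HM => [[_ s1] _]; exact: n_pos s1.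
have m0 : (0 < m)%N by case: Hy => [[_ s1] _]; exact: n_pos s1.
have mu1 : forall t, (t' <= t)%N -> mu t <= 1.
  elim=> [|t IH] Ht; first by move: Ht t'1; rewrite leqn0 => /eqP ->.
  move: Ht; rewrite leq_eqVlt => /orP[/eqP <- // | lt].
  apply: le_trans (IH lt); apply: mudec; exact: leq_trans t'1 lt.
have sx : forall t, (1 <= t)%N -> simplex (x t) by move=> t Ht; case: (x_simplex_pos n0 HM Ht).
have px : forall t, (1 <= t)%N -> forall i, 0 < x t i by move=> t Ht; case: (x_simplex_pos n0 HM Ht).
have [xs rxs] : exists xs, row_minimax A xs.
  have : forall N : nat, exists z, simplex z /\ fval A z < game_value A + 1 / N.+1%:R.
    by move=> N; apply: (inf_approx A01 n0 m0); rewrite divr_gt0.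
  case/choice => z Hz.
  have [p [sp cl]] := cluster_simplex (fun N => (Hz N).1).
  exists p; split => //; apply/eqP; rewrite eq_le (v_le_f A01 m0 sp) andbT.
  apply: (fval_cluster A01 m0 sp (fun N => (Hz N).1) ler01 cl) => N; exact: ltW (Hz N).2.
set v := game_value A in rxs *.
pose al k := (fval A (x k.*2.+1) - v) / @DD R n.
have oddk : forall k, odd k.*2.+1 by move=> k; rewrite /= odd_double.
pose S := fun T : nat => \sum_(1 <= t < T.+1) mu t.
have Sstep : forall T, S T.+2 = S T + mu T.+1 + mu T.+2.
  by move=> T; rewrite /S big_nat_recr //= big_nat_recr //= addrA.
have D2 := @DD_ge2 R n.
have liminf : forall e, 0 < e -> forall K, exists k, (K <= k)%N /\ al k < e.
  move=> e e0 K.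
  case: (pselect (exists k, (K <= k)%N /\ al k < e)) => // Hn; exfalso.
  have Hk : forall k, (K <= k)%N -> e <= al k.
    move=> k Kk; rewrite leNgt; apply/negP => H; apply: Hn; by exists k; split.
  set K' := maxn K t'.
  pose Phi k := RE xs (x k.*2.+1).
  have Phi0 : forall k, 0 <= Phi k.
    by move=> k; apply: RE_ge0 => //; [case: rxs | exact: sx | exact: px].
  have e2 : 0 < e ^+ 2 by rewrite exprn_gt0.
  have ind : forall N, Phi (K' + N)%N + e ^+ 2 / 2 * (S (K' + N)%N.*2.+1 - S K'.*2.+1) <= Phi K'.
    elim=> [|N IH]; first by rewrite addn0 subrr mulr0 addr0.
    set kk := (K' + N)%N in IH *.
    have -> : (K' + N.+1)%N = kk.+1 by rewrite addnS.
    have kK : (K <= kk)%N by apply: leq_trans (leq_maxl K t') (leq_addr _ _).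
    have kt : (t' <= kk.*2.+2)%N.
      rewrite /kk /K'; lia.
    have h1 := pair_step A01 n0 m0 mu0 HM HL Hy (isT : (1 <= kk.*2.+1)%N) (oddk kk) (mu1 _ kt) rxs.
    have -> : (kk.+1).*2.+1 = (kk.*2.+1).+2 by rewrite doubleS.
    rewrite Sstep.
    have hal := Hk kk kK.
    have m1 : 0 <= mu kk.*2.+2 by apply: mu0.
    have h2 : mu kk.*2.+2 * e ^+ 2 <= mu kk.*2.+2 * al kk ^+ 2.
      apply: ler_wpM2l => //; apply: lerXn2r; rewrite ?nnegrE; lra.
    have h3 : mu kk.*2.+3 <= mu kk.*2.+2 by apply: mudec.
    have h5 : e ^+ 2 / 2 * mu kk.*2.+3 <= e ^+ 2 / 2 * mu kk.*2.+2.
      by apply: ler_wpM2l => //; apply: divr_ge0 => //; exact: ltW.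
    rewrite -/(Phi kk.+1) -/(Phi kk) -/(al kk) in h1 *.
    lra.
  have [N0 _ HN0] := (cvgryPge _).1 Hsum (S K'.*2.+1 + 2 * Phi K' / e ^+ 2 + 1).
  have := HN0 (K' + N0)%N.*2.+1 ltac:(rewrite /=; lia).
  rewrite /= => HB0.
  have := ind N0; have := Phi0 (K' + N0)%N.
  set T := (K' + N0)%N.*2.+1 in HB0 *.
  have HB : S K'.*2.+1 + 2 * Phi K' / e ^+ 2 + 1 <= S T := HB0.
  have hQ : e ^+ 2 / 2 * (2 * Phi K' / e ^+ 2) = Phi K' by field; rewrite gt_eqF.
  have : e ^+ 2 / 2 * (2 * Phi K' / e ^+ 2 + 1) <= e ^+ 2 / 2 * (S T - S K'.*2.+1).
    by apply: ler_wpM2l; [apply: divr_ge0 => //; exact: ltW | lra].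
  rewrite mulrDr hQ mulr1.
  lra.
have : forall N : nat, exists k, (N <= k)%N /\ al k < 1 / N.+1%:R.
  by move=> N; apply: liminf; rewrite divr_gt0.
case/choice => kf Hkf.
pose z N := x (kf N).*2.+1.
have sz : forall N, simplex (z N) by move=> N; apply: sx.
have [xb [sxb cl]] := cluster_simplex sz.
have Dp : 0 < @DD R n by lra.
have rxb : row_minimax A xb.
  split => //; apply/eqP; rewrite eq_le (v_le_f A01 m0 sxb) andbT.
  apply: (fval_cluster A01 m0 sxb sz (ltW Dp) cl) => N.
  have := (Hkf N).2; rewrite /al ltr_pdivrMr // mulrC mul1r => H.
  rewrite -/v; apply: ltW; rewrite -ltrBlDl; exact: H.
have [xb0 xb1] := sxb.
have xble1 : forall i, xb i <= 1.
  move=> i; rewrite -xb1 (bigD1 i) //= lerDl; apply: sumr_ge0 => k _; exact: xb0.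
pose pi := \prod_i (if 0 < xb i then xb i else 1).
have pi0 : 0 < pi.
  by apply: prodr_gt0 => i _; case: ifP.
have pile : forall i, 0 < xb i -> pi <= xb i.
  move=> i xi; rewrite /pi (bigD1 i) //= xi.
  rewrite -[leRHS]mulr1; apply: ler_wpM2l; first exact: ltW.
  apply: prodr_ile1 => j _; case: ifP => [xj|_]; last by rewrite ler01 lexx.
  by rewrite xble1 xb0.
have REev : forall e, 0 < e -> exists k0, (1 <= k0)%N /\ forall t, (k0 <= t)%N -> RE xb (x t) <= e.
  move=> e e0.
  pose d := Num.min (pi / 2) (e / (2 * (n%:R + 1))).
  have n1 : (0 < n%:R + 1 :> R) by rewrite ltr_wpDl.
  have d0 : 0 < d by rewrite /d lt_min divr_gt0 //= divr_gt0 // mulr_gt0.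
  have [N' tN' HN'] := cl d d0 t'.
  have kN' := (Hkf N').1.
  set k0 := (kf N').*2.+1.
  exists k0; split => //.
  have k0t : (t' <= k0)%N by rewrite /k0; lia.
  move=> t tk.
  have mu1' : forall u, (k0 <= u)%N -> mu u <= 1.
    by move=> u uk; apply: mu1; apply: leq_trans k0t uk.
  apply: le_trans (RE_mono_from A01 n0 m0 mu0 HM HL Hy rxb (isT : (1 <= k0)%N) (oddk (kf N')) mu1' tk) _.
  apply: le_trans (RE_small (d := d) sxb (px k0 isT) _ _) _.
  - move=> i xi; apply: ltW; apply: lt_le_trans (HN' i) _.
    rewrite /d ge_min; apply/orP; left; rewrite ler_pM2r ?invr_gt0 //; exact: pile.
  - by move=> i; apply: ltW; apply: lt_le_trans (HN' i) _.
  have : d <= e / (2 * (n%:R + 1)) by rewrite /d ge_min lexx orbT.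
  rewrite ler_pdivlMr ?mulr_gt0 // => hd.
  have : (0 <= n%:R :> R) by [].
  nra.
exists xb; split => //; split.
  apply/cvgrPdist_le => e e0; have [k0 [k1 H]] := REev e e0.
  exists k0 => // t Ht /=; rewrite sub0r normrN ger0_norm; first exact: H.
  have t1 : (1 <= t)%N by apply: leq_trans k1 Ht.
  by apply: RE_ge0 => //; [exact: sx | exact: px].
move=> i; apply/cvgrPdist_le => e e0.
have e4 : 0 < e ^+ 2 / 4 by apply: divr_gt0 => //; rewrite exprn_gt0.
have [k0 [k1 H]] := REev _ e4.
exists k0 => // t Ht /=.
have t1 : (1 <= t)%N by apply: leq_trans k1 Ht.
have := RE_coord i sxb (sx _ t1) (px _ t1).
have := H t Ht.
rewrite distrC.
have na := normr_ge0 (x t i - xb i).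
rewrite -[(x t i - xb i) ^+ 2](real_normK (num_real _)) !expr2 => h1 h2.
nra.
Qed.
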